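(* Let $n\ge 1$ and let $H$ be a maximal subgroup of the semigroup $M_n(\mathbb{FT})$. Then $H$ is isomorphic (as a group) to a direct product $\mathbb{R}\times\Sigma$ for some subgroup $\Sigma$ of the symmetric group $S_n$ (here $\mathbb{R}$ denotes the additive group of real numbers).
   Context: $\mathbb{FT}$ denotes the set $\mathbb{R}$ with operations $a\oplus b=\max(a,b)$ and $a\otimes b=a+b$. $M_n(\mathbb{FT})$ is the set of $n\times n$ matrices with real entries, which is a semigroup under tropical matrix multiplication $(A\otimes B)_{i,j}=\max_{k}(A_{i,k}+B_{k,j})$. A maximal subgroup of a semigroup is a subgroup (a subset which is a group under the semigroup operation, possibly with identity different from any identity of the semigroup) not properly contained in any other subgroup. *)

(* Defs.v *)
From Stdlib Require Import Rdefinitions.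
From HB Require Import structures.
From mathcomp Require Import all_boot all_order all_algebra all_fingroup.
From mathcomp Require Import Rstruct.
Set Implicit Arguments. Unset Strict Implicit. Unset Printing Implicit Defensive.
Import Order.TTheory GRing.Theory Num.Theory.
Local Open Scope ring_scope.

(* The max over the (nonempty for
   n >= 1) list of values s is computed as a fold of Num.max seeded with the
   head of s; for n = 0 the matrix type is trivial anyway. *)
Definition trop_mul (n : nat) (A B : 'M[R]_n) : 'M[R]_n :=
  \matrix_(i, j)
    (let s := [seq A i k + B k j | k : 'I_n] in
     \big[Num.max/head 0 s]_(x <- s) x).

Definition is_trop_subgroup (n : nat) (H : 'M[R]_n -> Prop) : Prop :=
  (forall x y, H x -> H y -> H (trop_mul x y)) /\
  exists e, H e /\
    (forall x, H x -> trop_mul e x = x /\ trop_mul x e = x) /\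
    (forall x, H x -> exists y, H y /\ trop_mul x y = e /\ trop_mul y x = e).

Definition is_maximal_trop_subgroup (n : nat) (H : 'M[R]_n -> Prop) : Prop :=
  is_trop_subgroup H /\
  forall K : 'M[R]_n -> Prop, is_trop_subgroup K ->
    (forall x, H x -> K x) -> forall x, K x -> H x.

(* Main.v *)
Require Import Defs.
From Stdlib Require Import Rdefinitions ClassicalEpsilon.
From HB Require Import structures.
From mathcomp Require Import all_boot all_order all_algebra all_fingroup.
From mathcomp Require Import Rstruct lra.
From Stdlib Require Import Classical.
Set Implicit Arguments. Unset Strict Implicit. Unset Printing Implicit Defensive.
Import Order.TTheory GRing.Theory Num.Theory.
Local Open Scope ring_scope.

Lemma bigmax_props (s : seq R) (x0 : R) :
  x0 <= \big[Num.max/x0]_(x <- s) x /\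
  (forall y, y \in s -> y <= \big[Num.max/x0]_(x <- s) x) /\
  (\big[Num.max/x0]_(x <- s) x = x0 \/ \big[Num.max/x0]_(x <- s) x \in s).
Proof.
elim: s => [|y s [IH1 [IH2 IH3]]]; rewrite ?big_nil ?big_cons.
- by split=> //; split; [move=> y; rewrite in_nil | left].
- split; first by rewrite le_max IH1 orbT.
  split.
  + move=> z; rewrite in_cons => /orP [/eqP ->|zs]; first by rewrite le_max lexx.
    by rewrite le_max IH2 // orbT.
  + rewrite maxEle; case: ifP => _.
    * case: IH3 => [->|h]; first by left.
      by right; rewrite in_cons h orbT.
    * by right; rewrite in_cons eqxx.
Qed.



Lemma tm_ge n (A B : 'M[R]_n) i j k : A i k + B k j <= trop_mul A B i j.
Proof.
rewrite /trop_mul mxE.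
have [_ [h _]] := bigmax_props [seq A i k0 + B k0 j | k0 : 'I_n] (head 0 [seq A i k0 + B k0 j | k0 : 'I_n]).
apply: h; apply/mapP; exists k => //; by rewrite mem_enum.
Qed.

Lemma tm_ex n (A B : 'M[R]_n) i j : exists k, trop_mul A B i j = A i k + B k j.
Proof.
rewrite /trop_mul mxE.
set s := [seq A i k0 + B k0 j | k0 : 'I_n].
have hs : head 0 s \in s.
  have : A i i + B i j \in s by apply/mapP; exists i => //; rewrite mem_enum.
  by case: s => [|x s'] //= _; rewrite in_cons eqxx.
have [_ [_ h]] := bigmax_props s (head 0 s).
have : \big[Num.max/head 0 s]_(x <- s) x \in s by case: h => [->|].
by move/mapP => [k _ ->]; exists k.
Qed.

Lemma tm_le n (A B : 'M[R]_n) i j v :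
  (forall k, A i k + B k j <= v) -> trop_mul A B i j <= v.
Proof. by move=> h; have [k ->] := tm_ex A B i j. Qed.

Lemma tm_assoc n (A B C : 'M[R]_n) :
  trop_mul (trop_mul A B) C = trop_mul A (trop_mul B C).
Proof.
apply/matrixP => i j; apply/eqP; rewrite eq_le; apply/andP; split.
- apply: tm_le => l; have [k ->] := tm_ex A B i l.
  apply: le_trans (tm_ge _ _ i j k); rewrite -addrA lerD2l; exact: tm_ge.
- apply: tm_le => k; have [l ->] := tm_ex B C k j.
  apply: le_trans (tm_ge _ _ i j l); rewrite addrA lerD2r; exact: tm_ge.
Qed.

Lemma tm_mono n (A B B' : 'M[R]_n) i j :
  (forall k l, B k l <= B' k l) -> trop_mul A B i j <= trop_mul A B' i j.
Proof.
move=> h; apply: tm_le => k; apply: le_trans (tm_ge _ _ i j k).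
by rewrite lerD2l.
Qed.

Definition scal n (r : R) (A : 'M[R]_n) : 'M[R]_n := \matrix_(i, j) (r + A i j).

Lemma scal_tml n r (A B : 'M[R]_n) : trop_mul (scal r A) B = scal r (trop_mul A B).
Proof.
apply/matrixP => i j; rewrite [in RHS]mxE; apply/eqP; rewrite eq_le; apply/andP; split.
- apply: tm_le => k; rewrite mxE -addrA lerD2l; exact: tm_ge.
- have [k ->] := tm_ex A B i j; apply: le_trans (tm_ge _ _ i j k).
  by rewrite mxE addrA.
Qed.

Lemma scal_tmr n r (A B : 'M[R]_n) : trop_mul A (scal r B) = scal r (trop_mul A B).
Proof.
apply/matrixP => i j; rewrite [in RHS]mxE; apply/eqP; rewrite eq_le; apply/andP; split.
- apply: tm_le => k; rewrite mxE addrCA lerD2l; exact: tm_ge.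
- have [k ->] := tm_ex A B i j; apply: le_trans (tm_ge _ _ i j k).
  by rewrite mxE addrCA.
Qed.

Lemma scal_scal n r r' (A : 'M[R]_n) : scal r (scal r' A) = scal (r + r')%R A.
Proof. by apply/matrixP => i j; rewrite !mxE addrA. Qed.

Lemma scal0 n (A : 'M[R]_n) : scal 0 A = A.
Proof. by apply/matrixP => i j; rewrite !mxE add0r. Qed.

Record ctx n (H : 'M[R]_n -> Prop) (E : 'M[R]_n) : Prop := Ctx {
  cE : H E;
  cmul : forall x y, H x -> H y -> H (trop_mul x y);
  cidl : forall x, H x -> trop_mul E x = x;
  cidr : forall x, H x -> trop_mul x E = x;
  cinv : forall x, H x -> exists y, H y /\ trop_mul x y = E /\ trop_mul y x = E;
  cscal : forall r x, H x -> H (scal r x)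
}.

Definition invf n (H : 'M[R]_n -> Prop) (E x : 'M[R]_n) : 'M[R]_n :=
  match excluded_middle_informative
          (exists y, H y /\ trop_mul x y = E /\ trop_mul y x = E) with
  | left h => proj1_sig (constructive_indefinite_description _ h)
  | right _ => x end.

Lemma invfP n (H : 'M[R]_n -> Prop) E x : ctx H E -> H x ->
  H (invf H E x) /\ trop_mul x (invf H E x) = E /\ trop_mul (invf H E x) x = E.
Proof.
move=> C hx; rewrite /invf; case: excluded_middle_informative => h.
- by case: (constructive_indefinite_description _ h).
- by case: h; apply: (cinv C).
Qed.

Lemma inv_uniq n (H : 'M[R]_n -> Prop) E x y : ctx H E -> H x -> H y ->
  trop_mul x y = E -> trop_mul y x = E -> invf H E x = y.
Proof.
move=> C hx hy h1 h2; have [hi [i1 i2]] := invfP C hx.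
have -> : invf H E x = trop_mul (trop_mul y x) (invf H E x) by rewrite h2 (cidl C hi).
by rewrite tm_assoc i1 (cidr C hy).
Qed.

Lemma scal_can1 n r (A : 'M[R]_n) : scal r (scal (- r)%R A) = A.
Proof. apply/matrixP => i j; rewrite !mxE; lra. Qed.

Lemma scal_can2 n r (A : 'M[R]_n) : scal (- r)%R (scal r A) = A.
Proof. apply/matrixP => i j; rewrite !mxE; lra. Qed.

Definition crit n (E : 'M[R]_n) i := E i i == 0.
Definition cl n (E : 'M[R]_n) i j := [&& crit E i, crit E j & E i j + E j i == 0].
Definition rep n (E : 'M[R]_n) (i : 'I_n) := odflt i [pick j | cl E i j].
Definition isrep n (E : 'M[R]_n) i := crit E i && (rep E i == i).
Definition Rel n (A B : 'M[R]_n) i k := A i k + B k i == 0.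

Section Basics.
Variables (n : nat) (H : 'M[R]_n -> Prop) (E : 'M[R]_n).
Hypothesis C : ctx H E.

Lemma EE : trop_mul E E = E.
Proof using C. exact: (cidl C (cE C)). Qed.

Lemma Etri i j k : E i k + E k j <= E i j.
Proof using C. by have := tm_ge E E i j k; rewrite EE. Qed.

Lemma Ediag i : E i i <= 0.
Proof using C. have := Etri i i i; lra. Qed.

Lemma Ecyc i j : E i j + E j i <= 0.
Proof using C. have := Etri i i j; have := Ediag i; lra. Qed.

Lemma critE i : crit E i -> E i i = 0.
Proof using C. by move/eqP. Qed.

Lemma cl_refl i : crit E i -> cl E i i.
Proof using C. by move=> h; rewrite /cl h (critE h) addr0 eqxx. Qed.

Lemma cl_sym i j : cl E i j -> cl E j i.
Proof using C. by case/and3P => a b /eqP c; rewrite /cl a b addrC c eqxx. Qed.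

Lemma cl_trans i j k : cl E i j -> cl E j k -> cl E i k.
Proof using C.
case/and3P => a b /eqP c; case/and3P => _ d /eqP e; rewrite /cl a d /=.
have := Etri i k j; have := Etri k i j; have := Ecyc i k; lra.
Qed.

Lemma cl_crit i j : cl E i j -> crit E i /\ crit E j.
Proof using C. by case/and3P. Qed.

Lemma rep_cl i : crit E i -> cl E i (rep E i).
Proof using C.
move=> h; rewrite /rep; case: pickP => [j //|]; by move/(_ i); rewrite cl_refl.
Qed.

Lemma rep_eq i j : cl E i j -> rep E i = rep E j.
Proof using C.
move=> h; rewrite /rep.
have e : cl E i =1 cl E j.
  move=> x; apply/idP/idP => hx; first exact: cl_trans (cl_sym h) hx.
  exact: cl_trans h hx.
rewrite (eq_pick e); case: pickP => //.
by move/(_ j); rewrite -e h.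
Qed.

Lemma rep_isrep i : crit E i -> isrep E (rep E i).
Proof using C.
move=> h; have c := rep_cl h; rewrite /isrep (cl_crit c).2 /=.
by rewrite -(rep_eq c).
Qed.

Lemma isrep_crit i : isrep E i -> crit E i.
Proof using C. by case/andP. Qed.

Lemma isrep_eq i j : isrep E i -> isrep E j -> cl E i j -> i = j.
Proof using C.
case/andP => _ /eqP hi /andP [_ /eqP hj] /rep_eq e.
by rewrite -hi -hj.
Qed.

Section Pair.
Variables A B : 'M[R]_n.
Hypotheses (hA : H A) (hB : H B) (hAB : trop_mul A B = E) (hBA : trop_mul B A = E).

Lemma Rel_le i k : A i k + B k i <= E i i.
Proof using C hA hB hAB hBA. by rewrite -hAB; apply: tm_ge. Qed.

Lemma Rel_crit i k : Rel A B i k -> crit E i /\ crit E k.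
Proof using C hA hB hAB hBA.
move/eqP => h; split; apply/eqP.
- have := Rel_le i k; have := Ediag i; lra.
- have := tm_ge B A k k i; rewrite hBA; have := Ediag k; lra.
Qed.

Lemma Rel_ex i : crit E i -> exists k, Rel A B i k.
Proof using C hA hB hAB hBA.
move/eqP => h; have [k hk] := tm_ex A B i i; exists k.
by rewrite /Rel -hk hAB h.
Qed.

Lemma Rel_clr i k k' : Rel A B i k -> cl E k k' -> Rel A B i k'.
Proof using C hA hB hAB hBA.
move=> r c; have [ci _] := Rel_crit r; move/eqP: r => r.
case/and3P: c => _ _ /eqP c.
have h1 := tm_ge A E i k' k; rewrite (cidr C hA) in h1.
have h2 := tm_ge E B k' i k; rewrite (cidl C hB) in h2.
have := Rel_le i k'; rewrite (critE ci) => h3.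
apply/eqP; lra.
Qed.

Lemma Rel_cll i i' k : Rel A B i k -> cl E i i' -> Rel A B i' k.
Proof using C hA hB hAB hBA.
move=> r c; case/and3P: (c) => _ ci' /eqP c'; move/eqP: r => r.
have h1 := tm_ge E A i' k i; rewrite (cidl C hA) in h1.
have h2 := tm_ge B E k i' i; rewrite (cidr C hB) in h2.
have := Rel_le i' k; rewrite (critE ci') => h3.
apply/eqP; lra.
Qed.

Lemma Rel_uniqr i k k' : Rel A B i k -> Rel A B i k' -> cl E k k'.
Proof using C hA hB hAB hBA.
move=> r r'; have [_ ck] := Rel_crit r; have [_ ck'] := Rel_crit r'.
move/eqP: r => r; move/eqP: r' => r'.
have h1 := tm_ge B A k k' i; rewrite hBA in h1.
have h2 := tm_ge B A k' k i; rewrite hBA in h2.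
have := Ecyc k k'.
by rewrite /cl ck ck' /=; move=> h3; apply/eqP; lra.
Qed.

Lemma Rel_uniql i i' k : Rel A B i k -> Rel A B i' k -> cl E i i'.
Proof using C hA hB hAB hBA.
move=> r r'; have [ci _] := Rel_crit r; have [ci' _] := Rel_crit r'.
move/eqP: r => r; move/eqP: r' => r'.
have h1 := tm_ge A B i i' k; rewrite hAB in h1.
have h2 := tm_ge A B i' i k; rewrite hAB in h2.
have := Ecyc i i'.
by rewrite /cl ci ci' /=; move=> h3; apply/eqP; lra.
Qed.

Lemma Rel_col i k l : Rel A B i k -> A l k = E l i + A i k.
Proof using C hA hB hAB hBA.
move/eqP => r.
have h1 := tm_ge E A l k i; rewrite (cidl C hA) in h1.
have h2 := tm_ge A B l i k; rewrite hAB in h2.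
lra.
Qed.

End Pair.

Lemma Rel_comp A B A' B' i s t :
  H A -> H B -> trop_mul A B = E -> trop_mul B A = E ->
  trop_mul (trop_mul A A') (trop_mul B' B) = E ->
  Rel A B i s -> Rel A' B' s t ->
  Rel (trop_mul A A') (trop_mul B' B) i t /\ trop_mul A A' i t = A i s + A' s t.
Proof using C.
move=> hA hB hAB hBA h r r'.
have [ci _] := Rel_crit hA hB hAB hBA r.
move/eqP: r => r; move/eqP: r' => r'.
have h1 := tm_ge A A' i t s.
have h2 := tm_ge B' B t i s.
have h3 := tm_ge (trop_mul A A') (trop_mul B' B) i i t; rewrite h (critE ci) in h3.
split; first apply/eqP; lra.
Qed.

End Basics.

Definition sig0 n (H : 'M[R]_n -> Prop) (E A : 'M[R]_n) (i : 'I_n) : 'I_n :=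
  if isrep E i then rep E (odflt i [pick k | Rel A (invf H E A) i k]) else i.

Definition sigma n (H : 'M[R]_n -> Prop) (E A : 'M[R]_n) : {perm 'I_n} :=
  match excluded_middle_informative (injective (sig0 H E A)) with
  | left h => perm h | right _ => 1%g end.

Definition nus n (H : 'M[R]_n -> Prop) (E A : 'M[R]_n) : R :=
  \sum_(i | isrep E i) A i (sigma H E A i).

Definition mR n (E : 'M[R]_n) : R := \sum_(i | isrep E i) 1.

Section Sig.
Variables (n : nat) (H : 'M[R]_n -> Prop) (E : 'M[R]_n).
Hypothesis C : ctx H E.

Lemma sig0_rep A i : H A -> isrep E i ->
  isrep E (sig0 H E A i) /\ Rel A (invf H E A) i (sig0 H E A i).
Proof.
move=> hA hi; have [hB [hAB hBA]] := invfP C hA.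
rewrite /sig0 hi; case: pickP => [k hk|none].
- have [_ ck] := Rel_crit C hA hB hAB hBA hk.
  rewrite /=; split; first by have := rep_isrep C ck.
  by have := Rel_clr C hA hB hAB hBA hk (rep_cl C ck).
- have [k hk] := Rel_ex C hA hB hAB hBA (isrep_crit C hi).
  by have := none k; rewrite hk.
Qed.

Lemma sig0_nonrep A i : ~~ isrep E i -> sig0 H E A i = i.
Proof. by move=> h; rewrite /sig0 (negbTE h). Qed.

Lemma sig0_char A i k : H A -> isrep E i -> isrep E k ->
  Rel A (invf H E A) i k -> sig0 H E A i = k.
Proof.
move=> hA hi hk r; have [hB [hAB hBA]] := invfP C hA.
have [r1 r2] := sig0_rep hA hi.
apply: (isrep_eq C r1 hk); by have := Rel_uniqr C hA hB hAB hBA r2 r.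
Qed.

Lemma sig0_inj A : H A -> injective (sig0 H E A).
Proof.
move=> hA i j e; have [hB [hAB hBA]] := invfP C hA.
case hi: (isrep E i); case hj: (isrep E j).
- have [_ ri] := sig0_rep hA hi; have [_ rj] := sig0_rep hA hj.
  rewrite e in ri.
  exact: (isrep_eq C hi hj (Rel_uniql C hA hB hAB hBA ri rj)).
- have [si _] := sig0_rep hA hi; rewrite e sig0_nonrep ?hj // in si.
- have [sj _] := sig0_rep hA hj; rewrite -e sig0_nonrep ?hi // in sj.
- by rewrite !sig0_nonrep ?hi ?hj in e.
Qed.

Lemma sigmaE A : H A -> forall i, sigma H E A i = sig0 H E A i.
Proof.
move=> hA i; rewrite /sigma; case: excluded_middle_informative => h.
- by rewrite permE.
- by case: h; apply: sig0_inj.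
Qed.

Lemma isrep_sig A i : H A -> isrep E (sigma H E A i) = isrep E i.
Proof.
move=> hA; rewrite sigmaE //; case hi: (isrep E i).
- by have [-> _] := sig0_rep hA hi.
- by rewrite sig0_nonrep ?hi.
Qed.

Lemma sig_rep A i : H A -> isrep E i -> Rel A (invf H E A) i (sigma H E A i).
Proof. by move=> hA hi; rewrite sigmaE //; have [_ ->] := sig0_rep hA hi. Qed.

Lemma inv_mul A A' : H A -> H A' ->
  invf H E (trop_mul A A') = trop_mul (invf H E A') (invf H E A) /\
  trop_mul (trop_mul A A') (trop_mul (invf H E A') (invf H E A)) = E.
Proof.
move=> hA hA'; have [hB [hAB hBA]] := invfP C hA; have [hB' [hAB' hBA']] := invfP C hA'.
have h1 : trop_mul (trop_mul A A') (trop_mul (invf H E A') (invf H E A)) = E.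
  by rewrite tm_assoc -(tm_assoc A') hAB' (cidl C hB) hAB.
have h2 : trop_mul (trop_mul (invf H E A') (invf H E A)) (trop_mul A A') = E.
  by rewrite tm_assoc -(tm_assoc (invf H E A)) hBA (cidl C hA') hBA'.
split => //; apply: inv_uniq => //; apply: (cmul C) => //.
Qed.

Lemma sigma_mul A A' : H A -> H A' ->
  sigma H E (trop_mul A A') = (sigma H E A * sigma H E A')%g.
Proof.
move=> hA hA'; have hAA' := cmul C hA hA'.
apply/permP => i; rewrite permM !sigmaE //.
case hi: (isrep E i).
- have [hB [hAB hBA]] := invfP C hA.
  have [r1 r2] := sig0_rep hA hi; have [r3 r4] := sig0_rep hA' r1.
  have [e h] := inv_mul hA hA'.
  have [rr _] := Rel_comp C hA hB hAB hBA h r2 r4.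
  apply: sig0_char => //; by rewrite e.
- by rewrite !sig0_nonrep ?hi.
Qed.

Lemma invE : invf H E E = E.
Proof. exact: (inv_uniq C (cE C) (cE C) (EE C) (EE C)). Qed.

Lemma sigma_E : sigma H E E = 1%g.
Proof.
apply/permP => i; rewrite perm1 sigmaE; last exact: cE C.
case hi: (isrep E i); last by rewrite sig0_nonrep ?hi.
apply: sig0_char => //; first exact: cE C.
by rewrite invE /Rel (critE C (isrep_crit C hi)) addr0.
Qed.

Lemma sigma_scal r A : H A -> sigma H E (scal r A) = sigma H E A.
Proof.
move=> hA; have [hB [hAB hBA]] := invfP C hA; have hsA := cscal C r hA.
have e : invf H E (scal r A) = scal (- r)%R (invf H E A).
  apply: inv_uniq => //; first exact: (cscal C (- r) hB).
  - by rewrite scal_tml scal_tmr scal_can1.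
  - by rewrite scal_tml scal_tmr scal_can2.
apply/permP => i; rewrite !sigmaE //; rewrite /sig0 e.
have ep : (fun k => Rel (scal r A) (scal (- r)%R (invf H E A)) i k) =1
          (fun k => Rel A (invf H E A) i k).
  move=> k; rewrite /Rel /= !mxE addrACA; by rewrite subrr add0r.
by rewrite (eq_pick ep).
Qed.

Lemma nus_mul A A' : H A -> H A' ->
  nus H E (trop_mul A A') = nus H E A + nus H E A'.
Proof.
move=> hA hA'; rewrite /nus.
have [hB [hAB hBA]] := invfP C hA.
rewrite (eq_bigr (fun i => A i (sigma H E A i) +
                 A' (sigma H E A i) (sigma H E A' (sigma H E A i)))).
  rewrite big_split /=; congr (_ + _).
  rewrite [RHS](reindex_inj (@perm_inj _ (sigma H E A))) /=.
  by apply: eq_bigl => i; rewrite isrep_sig.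
move=> i hi; rewrite sigma_mul // permM.
have r2 := sig_rep hA hi.
have r4 := sig_rep hA' (etrans (isrep_sig _ hA) hi).
have [_ h] := inv_mul hA hA'.
by have [_ ->] := Rel_comp C hA hB hAB hBA h r2 r4.
Qed.

Lemma nus_scal r A : H A -> nus H E (scal r A) = nus H E A + r * mR E.
Proof.
move=> hA; rewrite /nus /mR sigma_scal //.
rewrite (eq_bigr (fun i => r + A i (sigma H E A i))); last by move=> i _; rewrite mxE.
rewrite big_split /= addrC; congr (_ + _).
by rewrite big_distrr /=; apply: eq_bigr => i _; rewrite mulr1.
Qed.

Lemma nus_E : nus H E E = 0.
Proof.
rewrite /nus sigma_E; apply: big1 => i hi.
by rewrite perm1 (critE C (isrep_crit C hi)).
Qed.

End Sig.

Section Ker.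
Variables (n : nat) (H : 'M[R]_n -> Prop) (E : 'M[R]_n).
Hypothesis C : ctx H E.

Lemma Gen l j : exists k, crit E k /\ E l j = E l k + E k j.
Proof using C.
have hf : forall u, exists k, E u j = E u k + E k j.
  by move=> u; have [k hk] := tm_ex E E u j; exists k; rewrite -hk (EE C).
pose f := fun u => odflt u [pick k | E u j == E u k + E k j].
have fP : forall u, E u j = E u (f u) + E (f u) j.
  move=> u; rewrite /f; case: pickP => [k /eqP //|none].
  by have [k hk] := hf u; have := none k; rewrite hk eqxx.
have Q : forall t u, E u j = E u (iter t.+1 f u) + E (iter t.+1 f u) j.
  elim=> [|t IH] u; first exact: fP.
  rewrite iterS; set w := iter t.+1 f u.
  have := IH u; have := fP w; have := Etri C u (f w) w; have := Etri C u j (f w).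
  rewrite -/w; lra.
have [a [b [ab e]]] : exists a b : nat, (a < b)%N /\ iter a f l = iter b f l.
  apply: NNPP => hn.
  have inj : injective (fun t : 'I_n.+1 => iter t f l).
    move=> x y exy; apply/val_inj; case: (ltngtP x y) => // h.
    - by case: hn; exists x, y.
    - by case: hn; exists y, x.
  by have := leq_card (fun t : 'I_n.+1 => iter t f l) inj; rewrite !card_ord ltnn.
set v := iter a f l.
have hv : iter (b - a) f v = v by rewrite /v -iterD subnK ?(ltnW ab) // -e.
have hba : (b - a = (b - a).-1.+1)%N by rewrite prednK // subn_gt0.
have cv : crit E v.
  have := Q (b - a).-1 v; rewrite -hba hv => h; apply/eqP; lra.
exists v; split => //.
have hb : (b = b.-1.+1)%N by rewrite prednK //; apply: leq_ltn_trans ab.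
by have := Q b.-1 l; rewrite -hb -e.
Qed.

Lemma crit_ex (i0 : 'I_n) : exists i, isrep E i.
Proof using C.
have [k [ck _]] := Gen i0 i0; exists (rep E k); by have := rep_isrep C ck.
Qed.

Lemma mR_pos (i0 : 'I_n) : 0 < mR E.
Proof using C.
have [i hi] := crit_ex i0.
rewrite /mR (bigD1 i) //=; apply: (lt_le_trans ltr01).
rewrite lerDl; apply: sumr_ge0 => *; exact: ler01.
Qed.

Lemma ge_E X Y : H X -> H Y -> trop_mul X Y = E -> trop_mul Y X = E ->
  (forall k, crit E k -> X k k = 0 /\ Rel X Y k k) ->
  forall l j, E l j <= X l j.
Proof using C.
move=> hX hY hXY hYX hk l j.
have [k [ck e]] := Gen l j.
have [x0 r] := hk k ck.
have := Rel_col C hX hY hXY hYX l r; rewrite x0 addr0 => e2.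
have := tm_ge X E l j k; rewrite (cidr C hX) e2 -e //.
Qed.

Lemma bound X i j : H X -> X j j + E i j + E j i <= X i i.
Proof using C.
move=> hX.
have h1 := tm_ge X E i i j; rewrite (cidr C hX) in h1.
have h2 := tm_ge E X i j j; rewrite (cidl C hX) in h2.
lra.
Qed.

Lemma kernel (i0 : 'I_n) C0 : H C0 -> sigma H E C0 = 1%g -> nus H E C0 = 0 -> C0 = E.
Proof using C.
move=> hC hs hn.
have [hD [hCD hDC]] := invfP C hC; set D := invf H E C0 in hD hCD hDC.
have K1 : forall i, crit E i -> Rel C0 D i i.
  move=> i ci; have hr := rep_isrep C ci.
  have := sig_rep C hC hr; rewrite hs perm1 => r.
  have c := rep_cl C ci.
  by have := Rel_clr C hC hD hCD hDC (Rel_cll C hC hD hCD hDC r (cl_sym C c)) (cl_sym C c).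
pose pw k := iter k (fun X => trop_mul X C0) C0.
pose ipw k := iter k (fun X => trop_mul D X) D.
have P : forall k, [/\ H (pw k), H (ipw k), trop_mul (pw k) (ipw k) = E,
   trop_mul (ipw k) (pw k) = E &
   forall i, crit E i -> Rel (pw k) (ipw k) i i /\ pw k i i = k.+1%:R * C0 i i].
  elim=> [|k [h1 h2 h3 h4 h5]].
  - split => //= i ci; split; [exact: K1 | by rewrite mul1r].
  - have e1 : pw k.+1 = trop_mul (pw k) C0 by [].
    have e2 : ipw k.+1 = trop_mul D (ipw k) by [].
    have h6 : trop_mul (trop_mul (pw k) C0) (trop_mul D (ipw k)) = E.
      by rewrite tm_assoc -(tm_assoc C0) hCD (cidl C h2) h3.
    rewrite e1 e2; split.
    + by have := cmul C h1 hC.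
    + by have := cmul C hD h2.
    + exact: h6.
    + by rewrite tm_assoc -(tm_assoc (ipw k)) h4 (cidl C hC) hDC.
    + move=> i ci; have [r1 v1] := h5 i ci.
      have [r v] := Rel_comp C h1 h2 h3 h4 h6 r1 (K1 i ci).
      split => //; rewrite v v1 -[k.+2]addn1 natrD mulrDl mul1r //.
have K4 : forall i j, crit E i -> crit E j -> C0 j j <= C0 i i.
  move=> i j ci cj; rewrite leNgt; apply/negP => hlt.
  set d := C0 j j - C0 i i.
  have dp : 0 < d by rewrite /d subr_gt0.
  set c := E i j + E j i.
  have cn : c <= 0 by have := Ecyc C i j.
  have hge : 0 <= - c / d by apply: divr_ge0; [rewrite oppr_ge0 | apply: ltW].
  set N := Num.Def.archi_bound (- c / d).
  have h1 : - c / d < N%:R := archi_boundP hge.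
  rewrite ltr_pdivrMr // /d mulrBr in h1.
  have [hP _ _ _ h5] := P N.
  have := bound i j hP; rewrite (h5 i ci).2 (h5 j cj).2 -/c.
  rewrite -addn1 natrD !mulrDl !mul1r => h.
  move: h h1 dp; rewrite /d /c; lra.
have [i1 hi1] := crit_ex i0.
have Ki : forall i, crit E i -> C0 i i = 0.
  have e : nus H E C0 = C0 i1 i1 * mR E.
    rewrite /nus /mR big_distrr /=; apply: eq_bigr => i hi.
    rewrite hs perm1 mulr1; apply/eqP; rewrite eq_le.
    have ci := isrep_crit C hi; have c1 := isrep_crit C hi1.
    by rewrite !K4.
  have mp := mR_pos i0.
  have z : C0 i1 i1 = 0.
    move: e; rewrite hn => /esym/eqP; rewrite mulf_eq0 => /orP [/eqP //|].
    by rewrite (gt_eqF mp).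
  move=> i ci; apply/eqP; rewrite eq_le.
  have c1 := isrep_crit C hi1.
  by rewrite -z !K4.
have G1 := ge_E hC hD hCD hDC (fun k ck => conj (Ki k ck) (K1 k ck)).
have G2 : forall l j, E l j <= D l j.
  apply: ge_E hD hC hDC hCD _ => k ck; have := K1 k ck; rewrite /Rel Ki // add0r => /eqP dk.
  by split => //; rewrite /Rel dk addr0.
apply/matrixP => l j; apply: le_anti; rewrite G1 andbT.
by have := tm_mono C0 l j G2; rewrite (cidr C hC) hCD.
Qed.

End Ker.

Definition pb (P : Prop) : bool := if excluded_middle_informative P then true else false.

Lemma pbP (P : Prop) : pb P <-> P.
Proof. by rewrite /pb; case: excluded_middle_informative. Qed.

Theorem corollary7p10 (n : nat) (Hn : (0 < n)%N) (H : 'M[R]_n -> Prop) :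
  is_maximal_trop_subgroup H ->
  exists (Sigma : {group {perm 'I_n}}) (phi : 'M[R]_n -> R * {perm 'I_n}),
    (forall x, H x -> (phi x).2 \in Sigma) /\
    (forall x y, H x -> H y ->
       phi (trop_mul x y) = ((phi x).1 + (phi y).1, ((phi x).2 * (phi y).2)%g)) /\
    (forall x y, H x -> H y -> phi x = phi y -> x = y) /\
    (forall (r : R) (s : {perm 'I_n}), s \in Sigma -> exists x, H x /\ phi x = (r, s)).
Proof.
move=> [[hmul [E [hE [hid hinv]]]] hmax].
have i0 : 'I_n := Ordinal Hn.
have hsc : forall r x, H x -> H (scal r x).
  move=> r x hx; apply: (hmax (fun z => exists r y, H y /\ z = scal r y)); last by exists r, x.
  - split.
    + move=> _ _ [r1 [y1 [h1 ->]]] [r2 [y2 [h2 ->]]].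
      exists (r1 + r2)%R, (trop_mul y1 y2); split; first exact: hmul.
      by rewrite scal_tml scal_tmr scal_scal.
    + exists E; split; first by exists 0%R, E; rewrite scal0.
      split.
      * move=> _ [r1 [y1 [h1 ->]]]; rewrite scal_tml scal_tmr.
        by have [-> ->] := hid _ h1.
      * move=> _ [r1 [y1 [h1 ->]]]; have [y' [hy' [a b]]] := hinv _ h1.
        exists (scal (- r1)%R y'); split; first by exists (- r1)%R, y'.
        by rewrite !scal_tml !scal_tmr a b scal_can1 scal_can2.
  - by move=> z hz; exists 0%R, z; rewrite scal0.
have C : ctx H E := Ctx hE hmul (fun x h => (hid x h).1) (fun x h => (hid x h).2) hinv hsc.
have mp := mR_pos C i0.
have mn : mR E != 0 by rewrite gt_eqF.
pose S := [set s : {perm 'I_n} | pb (exists x, H x /\ sigma H E x = s)].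
have gS : group_set S.
  apply/group_setP; split.
  - by rewrite inE; apply/pbP; exists E; split; [exact: hE | by rewrite (sigma_E C)].
  - move=> s t; rewrite !inE => /pbP [x [hx <-]] /pbP [y [hy <-]].
    by apply/pbP; exists (trop_mul x y); split; [exact: hmul | by rewrite (sigma_mul C hx hy)].
have hSig : forall s, (s \in <<S>>%G) = (s \in S) by move=> s; rewrite /= gen_set_id.
exists (<<S>>%G), (fun A => (nus H E A / mR E, sigma H E A)).
split; [|split; [|split]].
- move=> x hx /=; rewrite hSig inE; apply/pbP; by exists x.
- move=> x y hx hy /=; by rewrite nus_mul // sigma_mul // mulrDl.
- move=> x y hx hy [e1 e2].
  have e3 : nus H E x = nus H E y.
    by move: e1 => /(congr1 (fun z => z * mR E)); rewrite !divfK.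
  have [hy' [hyy' hy'y]] := invfP C hy; set y' := invf H E y in hy' hyy' hy'y.
  have hc := hmul _ _ hx hy'.
  have s1 : sigma H E (trop_mul x y') = 1%g.
    by rewrite sigma_mul // e2 -sigma_mul // hyy' (sigma_E C).
  have n1 : nus H E (trop_mul x y') = 0.
    by rewrite nus_mul // e3 -nus_mul // hyy' (nus_E C).
  have k := kernel C i0 hc s1 n1.
  by rewrite -(hid _ hx).2 -hy'y -tm_assoc k (hid _ hy).1.
- move=> r s; rewrite hSig inE => /pbP [x [hx <-]].
  exists (scal (r - nus H E x / mR E)%R x); split; first exact: hsc.
  rewrite nus_scal // sigma_scal //; congr pair.
  by rewrite mulrBl divfK // addrC subrK mulfK.
Qed.
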